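(* Let $\mathbf{F}\in\{\mathbf{R},\mathbf{C}\}$, let $A_1,\dots,A_n\in\mathbf{H}_d$ be positive semidefinite, let $Z_*\in\mathbf{H}_d$ be positive semidefinite of rank $r\ge1$, let $\xi\in\mathbf{R}^n$ and $y=\mathcal{A}(Z_* )+\xi$. Let $X_*\in\mathbf{F}^{d\times r}$ satisfy $Z_*=X_*X_*^*$. Let $X\in\mathbf{F}^{d\times p}$ be a second-order critical point of $f_p(X)=\|y-\mathcal{A}(XX^* )\|^2$. Then for every $R\in\mathbf{F}^{p\times r}$, $$\|\mathcal{A}(XX^*-Z_* )\|^2\le\langle\xi,\mathcal{A}(XX^*-Z_* )\rangle+\frac{2}{p+2}\big\langle y,\mathcal{A}((X_*-XR)(X_*-XR)^* )\big\rangle\le\langle\xi,\mathcal{A}(XX^*-Z_* )\rangle+\frac{2\|\mathcal{A}^*(y)\|_{\mathrm{op}}}{p+2}\|X_*-XR\|_F^2 .$$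
   Context: $\mathbf{H}_d$: $d\times d$ Hermitian matrices over $\mathbf{F}$ with real Frobenius inner product $\langle A,B\rangle=\operatorname{Re}\operatorname{tr}(A^*B)$. $\mathcal{A}(S)=(\langle A_1,S\rangle,\dots,\langle A_n,S\rangle)\in\mathbf{R}^n$, $\mathcal{A}^*(z)=\sum_iz_iA_i$. A second-order critical point is a point where the gradient is zero and the Hessian is positive semidefinite (in the complex case, with respect to the real and imaginary parts of $X$). *)

(* Defs.v *)
From HB Require Import structures.
From mathcomp Require Import all_boot all_order all_algebra.
From mathcomp Require Import all_classical all_reals all_analysis.
From mathcomp Require Import complex.
Set Implicit Arguments. Unset Strict Implicit. Unset Printing Implicit Defensive.
Import Order.TTheory GRing.Theory Num.Theory.
Local Open Scope ring_scope.
Local Open Scope classical_set_scope.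

(* Everything is parameterised by the scalar field F in {R, C}, given together
   with its conjugation conjF, its real part reF : F -> R and the embedding
   embF : R -> F of the reals.  The two instances used are
     F = R,    conjF = id,    reF = id,   embF = id
     F = R[i], conjF = conjc, reF = Re,   embF = (fun t => t%:C). *)
Section Generic.
Variables (R : realType) (F : numFieldType)
  (conjF : F -> F) (reF : F -> R) (embF : R -> F).

Definition adj m n (A : 'M[F]_(m, n)) : 'M[F]_(n, m) := map_mx conjF A^T.

Definition inner m n (A B : 'M[F]_(m, n)) : R := reF (\tr (adj A *m B)).

Definition frob m n (A : 'M[F]_(m, n)) : R := Num.sqrt (inner A A).

Definition hermitian d (A : 'M[F]_d) : Prop := adj A = A.

Definition psd d (A : 'M[F]_d) : Prop :=
  hermitian A /\ forall v : 'cV[F]_d, 0 <= reF ((adj v *m A *m v) 0 0).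

Definition meas n d (As : 'I_n -> 'M[F]_d) (S : 'M[F]_d) : 'I_n -> R :=
  fun i => inner (As i) S.

Definition measadj n d (As : 'I_n -> 'M[F]_d) (z : 'I_n -> R) : 'M[F]_d :=
  \sum_(i < n) embF (z i) *: As i.

Definition dotR n (u v : 'I_n -> R) : R := \sum_(i < n) u i * v i.
Definition sqnorm n (u : 'I_n -> R) : R := dotR u u.

Definition vnorm d (v : 'cV[F]_d) : R := Num.sqrt (reF ((adj v *m v) 0 0)).

Definition opnorm d (M : 'M[F]_d) : R :=
  sup [set vnorm (M *m v) | v in [set v : 'cV[F]_d | vnorm v = 1]].

Definition fp n d p (As : 'I_n -> 'M[F]_d) (y : 'I_n -> R) (X : 'M[F]_(d, p)) : R :=
  sqnorm (fun i => y i - meas As (X *m adj X) i).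

(* second-order critical point of f, with f viewed as a function of the real
   (and imaginary) parts of X: in every (real) direction U the first
   directional derivative vanishes and the second one is nonnegative, i.e.
   gradient zero and Hessian positive semidefinite. *)
Definition second_order_critical d p (f : 'M[F]_(d, p) -> R) (X : 'M[F]_(d, p)) : Prop :=
  forall U : 'M[F]_(d, p),
    let g := fun t : R => f (X + embF t *: U) in
    [/\ (forall t, derivable g t 1),
        g^`() 0 = 0,
        (forall t, derivable g^`() t 1) &
        0 <= g^`()^`() 0].

Definition lemma1_claim : Prop :=
  forall (d n r p : nat) (As : 'I_n -> 'M[F]_d) (Zs : 'M[F]_d)
         (xi y : 'I_n -> R) (Xs : 'M[F]_(d, r)) (X : 'M[F]_(d, p)),
    (forall i, psd (As i)) ->
    psd Zs -> \rank Zs = r -> (1 <= r)%N ->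
    y = (fun i => meas As Zs i + xi i) ->
    Zs = Xs *m adj Xs ->
    second_order_critical (fp As y) X ->
    forall Rm : 'M[F]_(p, r),
      let D := meas As (X *m adj X - Zs) in
      let E := Xs - X *m Rm in
      sqnorm D <= dotR xi D + 2 / (p%:R + 2) * dotR y (meas As (E *m adj E))
      /\
      dotR xi D + 2 / (p%:R + 2) * dotR y (meas As (E *m adj E))
        <= dotR xi D + 2 * opnorm (measadj As y) / (p%:R + 2) * frob E ^+ 2.

End Generic.

(* Main.v *)
Require Import Defs.
From HB Require Import structures.
From mathcomp Require Import all_boot all_order all_algebra.
From mathcomp Require Import all_classical all_reals all_analysis.
From mathcomp Require Import complex.
Set Implicit Arguments. Unset Strict Implicit. Unset Printing Implicit Defensive.
Import Order.TTheory GRing.Theory.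
Local Open Scope ring_scope.
From mathcomp Require Import ring lra.
Section Gen.
Import Num.Theory.
Variables (R : realType) (F : numFieldType)
  (conjF : F -> F) (reF : F -> R) (embF : R -> F).
Hypothesis cD : forall a b, conjF (a + b) = conjF a + conjF b.
Hypothesis cM : forall a b, conjF (a * b) = conjF a * conjF b.
Hypothesis cK : forall a, conjF (conjF a) = a.
Hypothesis c1 : conjF 1 = 1.
Hypothesis cE : forall t, conjF (embF t) = embF t.
Hypothesis rD : forall a b, reF (a + b) = reF a + reF b.
Hypothesis rE : forall t a, reF (embF t * a) = t * reF a.
Hypothesis rC : forall a, reF (conjF a) = reF a.
Hypothesis rP : forall a, 0 <= reF (conjF a * a).
Hypothesis rR : forall a, conjF a * a = embF (reF (conjF a * a)).

Local Notation adj := (adj conjF).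
Local Notation inner := (inner conjF reF).
Local Notation meas := (meas conjF reF).
Local Notation vnorm := (vnorm conjF reF).

Lemma c0 : conjF 0 = 0.
Proof. by apply/(addrI (conjF 0)); rewrite -cD !addr0. Qed.
Lemma cN a : conjF (- a) = - conjF a.
Proof. by apply/(addrI (conjF a)); rewrite -cD !subrr c0. Qed.
Lemma cS (I : Type) (s : seq I) (P : pred I) (f : I -> F) :
  conjF (\sum_(i <- s | P i) f i) = \sum_(i <- s | P i) conjF (f i).
Proof. exact: (big_morph _ cD c0). Qed.
Lemma r0 : reF 0 = 0.
Proof. by apply/(addrI (reF 0)); rewrite -rD !addr0. Qed.
Lemma rN a : reF (- a) = - reF a.
Proof. by apply/(addrI (reF a)); rewrite -rD !subrr r0. Qed.
Lemma rB a b : reF (a - b) = reF a - reF b.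
Proof. by rewrite rD rN. Qed.
Lemma rS (I : Type) (s : seq I) (P : pred I) (f : I -> F) :
  reF (\sum_(i <- s | P i) f i) = \sum_(i <- s | P i) reF (f i).
Proof. exact: (big_morph _ rD r0). Qed.

Lemma adjD m n (A B : 'M[F]_(m, n)) : adj (A + B) = adj A + adj B.
Proof. by apply/matrixP => i j; rewrite !mxE cD. Qed.
Lemma adjN m n (A : 'M[F]_(m, n)) : adj (- A) = - adj A.
Proof. by apply/matrixP => i j; rewrite !mxE cN. Qed.
Lemma adjB m n (A B : 'M[F]_(m, n)) : adj (A - B) = adj A - adj B.
Proof. by rewrite adjD adjN. Qed.
Lemma adjM m n k (A : 'M[F]_(m, n)) (B : 'M[F]_(n, k)) :
  adj (A *m B) = adj B *m adj A.
Proof.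
apply/matrixP => i j; rewrite !mxE cS; apply: eq_bigr => l _.
by rewrite !mxE cM mulrC.
Qed.
Lemma adjK m n (A : 'M[F]_(m, n)) : adj (adj A) = A.
Proof. by apply/matrixP => i j; rewrite !mxE cK. Qed.
Lemma adjZ m n c (A : 'M[F]_(m, n)) : adj (c *: A) = conjF c *: adj A.
Proof. by apply/matrixP => i j; rewrite !mxE cM. Qed.
Lemma adjE m n t (A : 'M[F]_(m, n)) : adj (embF t *: A) = embF t *: adj A.
Proof. by rewrite adjZ cE. Qed.
Lemma adj1 n : adj (1%:M : 'M[F]_n) = 1%:M.
Proof. by apply/matrixP => i j; rewrite !mxE eq_sym; case: (_ == _); rewrite ?c1 ?c0. Qed.
Lemma adj_delta m n (i : 'I_m) (j : 'I_n) : adj (delta_mx i j : 'M[F]_(m,n)) = delta_mx j i.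
Proof.
apply/matrixP => a b; rewrite !mxE.
by case: (_ == _); case: (_ == _); rewrite /= ?c1 ?c0.
Qed.
Lemma tr_adj n (A : 'M[F]_n) : reF (\tr (adj A)) = reF (\tr A).
Proof.
rewrite /mxtrace -rC cS; congr (reF _); apply: eq_bigr => i _; by rewrite !mxE.
Qed.
Lemma sum_delta n : \sum_(j < n) (delta_mx j j : 'M[F]_n) = 1%:M.
Proof.
apply/matrixP => a b; rewrite summxE !mxE (bigD1 a) //= big1 ?addr0.
  by rewrite mxE eqxx /= eq_sym; case: (_ == _).
by move=> j /negbTE ja; rewrite mxE [a == j]eq_sym ja.
Qed.
Lemma innerD m n (A S T : 'M[F]_(m, n)) : inner A (S + T) = inner A S + inner A T.
Proof. by rewrite /Defs.inner mulmxDr mxtraceD rD. Qed.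
Lemma innerE m n t (A S : 'M[F]_(m, n)) : inner A (embF t *: S) = t * inner A S.
Proof. by rewrite /Defs.inner -scalemxAr mxtraceZ rE. Qed.
Lemma innerN m n (A S : 'M[F]_(m, n)) : inner A (- S) = - inner A S.
Proof. by rewrite /Defs.inner mulmxN linearN rN. Qed.
Lemma innerB m n (A S T : 'M[F]_(m, n)) : inner A (S - T) = inner A S - inner A T.
Proof. by rewrite innerD innerN. Qed.
Lemma innerS m n (A : 'M[F]_(m, n)) (I : finType) (f : I -> 'M[F]_(m, n)) :
  inner A (\sum_i f i) = \sum_i inner A (f i).
Proof. by rewrite /Defs.inner mulmx_sumr raddf_sum rS. Qed.

Definition beta d m (B : 'M[F]_d) (P Q : 'M[F]_(d, m)) := reF (\tr (adj P *m B *m Q)).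

Lemma beta_sym d m (B : 'M[F]_d) (P Q : 'M[F]_(d, m)) :
  Defs.hermitian conjF B -> beta B Q P = beta B P Q.
Proof.
move=> hB; rewrite /beta -[in RHS]tr_adj !adjM adjK hB mulmxA //.
Qed.
Lemma betaDl d m (B : 'M[F]_d) (P P' Q : 'M[F]_(d, m)) :
  beta B (P + P') Q = beta B P Q + beta B P' Q.
Proof. by rewrite /beta adjD !mulmxDl mxtraceD rD. Qed.
Lemma betaDr d m (B : 'M[F]_d) (P Q Q' : 'M[F]_(d, m)) :
  beta B P (Q + Q') = beta B P Q + beta B P Q'.
Proof. by rewrite /beta !mulmxDr mxtraceD rD. Qed.
Lemma betaEl d m (B : 'M[F]_d) t (P Q : 'M[F]_(d, m)) :
  beta B (embF t *: P) Q = t * beta B P Q.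
Proof. by rewrite /beta adjE -!scalemxAl mxtraceZ rE. Qed.
Lemma betaEr d m (B : 'M[F]_d) t (P Q : 'M[F]_(d, m)) :
  beta B P (embF t *: Q) = t * beta B P Q.
Proof. by rewrite /beta -!scalemxAr mxtraceZ rE. Qed.

Lemma tr_cols d m (B : 'M[F]_d) (P Q : 'M[F]_(d, m)) :
  \tr (adj P *m B *m Q) = \sum_j (adj (col j P) *m B *m col j Q) 0 0.
Proof.
rewrite /mxtrace; apply: eq_bigr => j _; rewrite !mxE; apply: eq_bigr => k _.
rewrite !mxE; congr (_ * _); apply: eq_bigr => l _; by rewrite !mxE.
Qed.

Lemma beta_ge0 d m (B : 'M[F]_d) (P : 'M[F]_(d, m)) :
  Defs.psd conjF reF B -> 0 <= beta B P P.
Proof.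
case=> _ hB; rewrite /beta tr_cols rS; apply: sumr_ge0 => j _; exact: hB.
Qed.

Lemma cs_real (a b c : R) : (forall t, 0 <= a + 2 * b * t + c * t ^+ 2) -> 0 <= c ->
  b ^+ 2 <= a * c.
Proof.
move=> H; rewrite le0r => /orP [/eqP c0'|cp].
  have [b0|bn0] := eqVneq b 0; first by rewrite b0 c0' expr0n /= mulr0.
  have := H (- (a + 1) / (2 * b)); rewrite c0' mul0r addr0.
  have -> : a + 2 * b * (- (a + 1) / (2 * b)) = -1.
    by field.
  by rewrite ler0N1.
have := H (- b / c).
have -> : a + 2 * b * (- b / c) + c * (- b / c) ^+ 2 = (a * c - b ^+ 2) / c.
  by field; rewrite gt_eqF.
by rewrite pmulr_lge0 ?invr_gt0 // subr_ge0.
Qed.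

Lemma beta_cs d m (B : 'M[F]_d) (P Q : 'M[F]_(d, m)) :
  Defs.psd conjF reF B -> beta B P Q ^+ 2 <= beta B P P * beta B Q Q.
Proof.
move=> hB; apply: cs_real; last exact: beta_ge0.
move=> t; have := beta_ge0 (P + embF t *: Q) hB.
rewrite !betaDl !betaDr !betaEl !betaEr (beta_sym _ _ hB.1).
by congr (0 <= _); ring.
Qed.

Lemma expand d p t (X U : 'M[F]_(d, p)) :
  (X + embF t *: U) *m adj (X + embF t *: U) =
  X *m adj X + embF t *: (X *m adj U + U *m adj X) + embF t *: (embF t *: (U *m adj U)).
Proof.
rewrite adjD adjE mulmxDl !mulmxDr -!scalemxAr -!scalemxAl scalerDr.
by rewrite !addrA.
Qed.

Lemma soc_facts n d p (As : 'I_n -> 'M[F]_d) y (X : 'M[F]_(d,p)) :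
  second_order_critical embF (fp conjF reF As y) X -> forall U,
  let r := fun i => y i - meas As (X *m adj X) i in
  let T := X *m adj U + U *m adj X in
  let W := U *m adj U in
  \sum_i r i * meas As T i = 0 /\ 2 * \sum_i r i * meas As W i <= \sum_i (meas As T i) ^+ 2.
Proof.
move=> H U r T W.
case: (H U) => _ h1 _ h2.
set a := r; pose b i := - meas As T i; pose c i := - meas As W i.
pose P : {poly R} := \sum_i ((a i ^+ 2)%:P + (2 * a i * b i) *: 'X
   + (b i ^+ 2 + 2 * a i * c i) *: 'X^2 + (2 * b i * c i) *: 'X^3 + (c i ^+ 2) *: 'X^4).
have gE : (fun t => fp conjF reF As y (X + embF t *: U)) = horner P.
  apply/funext => t; rewrite /fp /sqnorm /dotR horner_sum; apply: eq_bigr => i _.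
  rewrite expand /meas !innerD !innerE !hornerD !hornerZ hornerC hornerX !hornerXn /a /r /b /c /T /W /meas.
  ring.
rewrite gE -derivE horner_coef0 coef_deriv in h1.
rewrite gE -derivE -derivE horner_coef0 !coef_deriv in h2.
have P1 : P`_1 = \sum_i (2 * a i * b i).
  by rewrite coef_sum; apply: eq_bigr => i _; rewrite !coefE /=; ring.
have P2 : P`_2 = \sum_i (b i ^+ 2 + 2 * a i * c i).
  by rewrite coef_sum; apply: eq_bigr => i _; rewrite !coefE /=; ring.
rewrite P1 mulr1n in h1; rewrite P2 mulr1n in h2.
split.
  have : \sum_i (2 * a i * b i) = - 2 * \sum_i a i * meas As T i.
    by rewrite mulr_sumr; apply: eq_bigr => i _; rewrite /b; ring.
  rewrite h1 => /esym /eqP; rewrite mulf_eq0 oppr_eq0 pnatr_eq0 /= => /eqP //.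
have : \sum_i (b i ^+ 2 + 2 * a i * c i) = \sum_i (meas As T i) ^+ 2 - 2 * \sum_i a i * meas As W i.
  rewrite big_split /= mulr_sumr -sumrN; congr (_ + _); apply: eq_bigr => i _; rewrite /b /c; ring.
by move=> e; move: h2; rewrite e pmulrn_lge0 // subr_ge0.
Qed.

Lemma sum_jk n r p (rr : 'I_n -> R) (u : 'I_n -> 'I_r -> R) (v : 'I_n -> 'I_p -> R) :
  (forall j k, 2 * \sum_i rr i * u i j <= 4 * \sum_i u i j * v i k) ->
  2 * p%:R * \sum_i rr i * (\sum_j u i j) <= 4 * \sum_i (\sum_j u i j) * (\sum_k v i k).
Proof.
move=> H.
have L : \sum_j \sum_(k < p) (2 * \sum_i rr i * u i j) = 2 * p%:R * \sum_i rr i * (\sum_j u i j).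
  transitivity (\sum_j (2 * p%:R) * \sum_i rr i * u i j).
    apply: eq_bigr => j _; rewrite sumr_const card_ord -[_ *+ p]mulr_natr; ring.
  rewrite -mulr_sumr; congr (_ * _); rewrite exchange_big /=.
  apply: eq_bigr => i _; by rewrite mulr_sumr.
have Rr : \sum_j \sum_(k < p) (4 * \sum_i u i j * v i k) = 4 * \sum_i (\sum_j u i j) * (\sum_k v i k).
  transitivity (\sum_j \sum_(k < p) \sum_i 4 * (u i j * v i k)).
    apply: eq_bigr => j _; apply: eq_bigr => k _; by rewrite mulr_sumr.
  transitivity (\sum_i \sum_j \sum_(k < p) 4 * (u i j * v i k)).
    under eq_bigr do rewrite exchange_big /=.
    by rewrite exchange_big.
  rewrite mulr_sumr; apply: eq_bigr => i _.
  rewrite big_distrlr mulr_sumr /=; apply: eq_bigr => j _; by rewrite mulr_sumr.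
rewrite -L -Rr; apply: ler_sum => j _; apply: ler_sum => k _; exact: H.
Qed.

Lemma meas_T d p (B : 'M[F]_d) (X U : 'M[F]_(d, p)) : Defs.hermitian conjF B ->
  inner B (X *m adj U + U *m adj X) = 2 * beta B U X.
Proof.
move=> hB.
have e1 : forall P Q : 'M[F]_(d, p), inner B (P *m adj Q) = beta B Q P.
  by move=> P Q; rewrite /Defs.inner /beta hB mulmxA mxtrace_mulC mulmxA.
rewrite innerD !e1 (beta_sym _ _ hB).
by rewrite mulr2n mulrDl mul1r.
Qed.

Lemma beta_meas d m (B : 'M[F]_d) (P : 'M[F]_(d, m)) : Defs.hermitian conjF B ->
  beta B P P = inner B (P *m adj P).
Proof.
by move=> hB; rewrite /beta /Defs.inner hB [in RHS]mxtrace_mulC [in LHS]mxtrace_mulC mulmxA.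
Qed.

Lemma beta_shift d m (B : 'M[F]_d) (P Q : 'M[F]_(d, m)) (D : 'M[F]_m) :
  beta B (P *m D) Q = beta B P (Q *m adj D).
Proof.
by rewrite /beta adjM -!mulmxA [in LHS]mxtrace_mulC !mulmxA.
Qed.

Lemma sum_proj d m (Y : 'M[F]_(d, m)) :
  \sum_j (Y *m delta_mx j j) *m adj (Y *m delta_mx j j) = Y *m adj Y.
Proof.
under eq_bigr do rewrite adjM adj_delta mulmxA -[Y *m _ *m _]mulmxA mul_delta_mx.
by rewrite -mulmx_suml -mulmx_sumr sum_delta mulmx1.
Qed.

Lemma proj_jk d r p (E : 'M[F]_(d, r)) (j : 'I_r) (k : 'I_p) :
  (E *m delta_mx j k) *m adj (E *m delta_mx j k) = (E *m delta_mx j j) *m adj (E *m delta_mx j j).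
Proof.
by rewrite !adjM !adj_delta !mulmxA -[E *m _ *m _]mulmxA -[E *m delta_mx j j *m _]mulmxA !mul_delta_mx.
Qed.
Lemma soc_main n d p r (As : 'I_n -> 'M[F]_d) y (X : 'M[F]_(d,p)) (E : 'M[F]_(d,r)) :
  (forall i, Defs.psd conjF reF (As i)) ->
  second_order_critical embF (fp conjF reF As y) X ->
  2 * p%:R * \sum_i (y i - meas As (X *m adj X) i) * meas As (E *m adj E) i
   <= 4 * \sum_i meas As (E *m adj E) i * meas As (X *m adj X) i.
Proof.
move=> hA H.
pose u i j := meas As ((E *m delta_mx j j) *m adj (E *m delta_mx j j)) i.
pose v i k := meas As ((X *m delta_mx k k) *m adj (X *m delta_mx k k)) i.
have su i : \sum_j u i j = meas As (E *m adj E) i by rewrite /u /meas -innerS sum_proj.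
have sv i : \sum_k v i k = meas As (X *m adj X) i by rewrite /v /meas -innerS sum_proj.
have E1 : \sum_i (y i - meas As (X *m adj X) i) * meas As (E *m adj E) i
   = \sum_i (y i - meas As (X *m adj X) i) * (\sum_j u i j).
  by apply: eq_bigr => i _; rewrite su.
have E2 : \sum_i meas As (E *m adj E) i * meas As (X *m adj X) i
   = \sum_i (\sum_j u i j) * (\sum_k v i k).
  by apply: eq_bigr => i _; rewrite su sv.
rewrite E1 E2; apply: sum_jk => j k.
have [_ h] := soc_facts H (E *m delta_mx j k).
rewrite proj_jk in h.
apply: le_trans h _.
rewrite mulr_sumr; apply: ler_sum => i _.
have hB : Defs.hermitian conjF (As i) by case: (hA i).
rewrite /meas meas_T //.
set U := E *m delta_mx j k.
have -> : beta (As i) U X = beta (As i) U (X *m delta_mx k k).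
  have hU : U *m delta_mx k k = U by rewrite /U -mulmxA mul_delta_mx.
  by rewrite -{1}hU beta_shift adj_delta.
apply: (@le_trans _ _ (4 * (beta (As i) U U * beta (As i) (X *m delta_mx k k) (X *m delta_mx k k)))).
  rewrite exprMn (_ : (2:R) ^+ 2 = 4); last by rewrite expr2; lra.
  by rewrite ler_wpM2l // beta_cs.
rewrite !beta_meas // /U proj_jk /u /v /meas.
by rewrite mulrA.
Qed.
Lemma dot_ge0 d (v : 'cV[F]_d) : 0 <= reF ((adj v *m v) 0 0).
Proof. rewrite mxE rS; apply: sumr_ge0 => l _; rewrite !mxE; exact: rP. Qed.

Lemma psd1 d : Defs.psd conjF reF (1%:M : 'M[F]_d).
Proof. split; first exact: adj1. by move=> v; rewrite mulmx1 dot_ge0. Qed.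

Lemma vnorm_sq d (v : 'cV[F]_d) : vnorm v ^+ 2 = reF ((adj v *m v) 0 0).
Proof. by rewrite /Defs.vnorm sqr_sqrtr // dot_ge0. Qed.

Lemma vnorm_ge0 d (v : 'cV[F]_d) : 0 <= vnorm v.
Proof. exact: sqrtr_ge0. Qed.

Lemma beta1E d (a b : 'cV[F]_d) : beta 1%:M a b = reF ((adj a *m b) 0 0).
Proof. by rewrite /beta mulmx1 /mxtrace big_ord1. Qed.

Lemma vec_cs d (a b : 'cV[F]_d) : reF ((adj a *m b) 0 0) <= vnorm a * vnorm b.
Proof.
have := beta_cs a b (psd1 d); rewrite !beta1E => h.
rewrite /Defs.vnorm -sqrtrM ?dot_ge0 //.
apply: le_trans (ler_norm _) _; rewrite -sqrtr_sqr ler_sqrt //.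
by apply: mulr_ge0; apply: dot_ge0.
Qed.

Lemma vnormZ d c (v : 'cV[F]_d) : 0 <= c -> vnorm (embF c *: v) = c * vnorm v.
Proof.
move=> c0; rewrite /Defs.vnorm adjE -scalemxAl -scalemxAr !mxE !rE mulrA -expr2.
by rewrite sqrtrM ?sqr_ge0 // sqrtr_sqr ger0_norm.
Qed.

Lemma modcs d (a v : 'cV[F]_d) :
  reF (conjF ((adj a *m v) 0 0) * (adj a *m v) 0 0) <= vnorm a ^+ 2 * vnorm v ^+ 2.
Proof.
set w := (adj a *m v) 0 0.
have e1 : conjF w * w = (adj (w *: a) *m v) 0 0 by rewrite adjZ -scalemxAl mxE.
have h := vec_cs (w *: a) v; rewrite -e1 in h.
have e2 : vnorm (w *: a) = Num.sqrt (reF (conjF w * w)) * vnorm a.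
  rewrite /Defs.vnorm adjZ -scalemxAl -scalemxAr scalerA mxE {1}rR rE.
  by rewrite sqrtrM ?rP.
rewrite e2 in h.
have s0 := sqrtr_ge0 (reF (conjF w * w)).
have s2 := sqr_sqrtr (rP w).
have a0 := vnorm_ge0 a; have v0 := vnorm_ge0 v.
move: h s0 s2 a0 v0; set s := Num.sqrt _; set n := reF _; set A := vnorm a; set V := vnorm v.
move=> h s0 s2 a0 v0.
rewrite -s2 in h *; have K0 : 0 <= A * V by apply: mulr_ge0.
have [sK|Ks] := lerP s (A * V).
  by rewrite -exprMn !expr2; apply: ler_pM.
have : s * (A * V) < s ^+ 2 by rewrite expr2 ltr_pM2l // (le_lt_trans K0 Ks).
rewrite mulrA lt_leAnge h andbF //.
Qed.
Local Open Scope classical_set_scope.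
Lemma opnorm_ub d (M : 'M[F]_d) :
  has_ubound [set vnorm (M *m v) | v in [set v : 'cV[F]_d | vnorm v = 1]].
Proof.
exists (Num.sqrt (\sum_i vnorm (adj (row i M)) ^+ 2)).
move=> _ [v /= hv <-].
rewrite /Defs.vnorm ler_sqrt; last by apply: sumr_ge0 => i _; exact: sqr_ge0.
rewrite mxE rS; apply: ler_sum => i _.
have := modcs (adj (row i M)) v; rewrite hv expr1n mulr1 adjK.
have e : (row i M *m v) 0 0 = (M *m v) i 0 by rewrite -row_mul mxE.
have e2 : adj (M *m v) 0 i = conjF ((M *m v) i 0) by rewrite /Defs.adj mxE mxE.
by rewrite e e2 /Defs.vnorm adjK.
Qed.

Lemma op_le d (M : 'M[F]_d) v : 0 < vnorm v ->
  vnorm (M *m v) <= opnorm conjF reF M * vnorm v.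
Proof.
move=> vp; set a := vnorm v.
have ai : 0 <= a^-1 by rewrite invr_ge0 ltW.
have hu : vnorm (embF a^-1 *: v) = 1 by rewrite vnormZ // mulVf // gt_eqF.
have : vnorm (M *m (embF a^-1 *: v)) <= opnorm conjF reF M.
  by apply: (ub_le_sup (opnorm_ub M)); exists (embF a^-1 *: v).
by rewrite -scalemxAr vnormZ // mulrC ler_pdivrMr.
Qed.

Lemma quad_op d (M : 'M[F]_d) v :
  reF ((adj v *m M *m v) 0 0) <= opnorm conjF reF M * vnorm v ^+ 2.
Proof.
rewrite -mulmxA; apply: le_trans (vec_cs v (M *m v)) _.
have [->|vn] := eqVneq (vnorm v) 0; first by rewrite !mul0r expr0n /= mulr0.
have vp : 0 < vnorm v by rewrite lt_def vn vnorm_ge0.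
apply: le_trans (ler_wpM2l (vnorm_ge0 v) (op_le M vp)) _.
by rewrite mulrCA expr2.
Qed.
Lemma frob_sq m r (E : 'M[F]_(m, r)) : frob conjF reF E ^+ 2 = \sum_j vnorm (col j E) ^+ 2.
Proof.
have e : inner E E = \sum_j vnorm (col j E) ^+ 2.
  rewrite /Defs.inner -(mulmx1 (adj E)) tr_cols rS; apply: eq_bigr => j _.
  by rewrite vnorm_sq mulmx1.
rewrite /frob e sqr_sqrtr //; apply: sumr_ge0 => j _; exact: sqr_ge0.
Qed.

Lemma yS_le n d r (As : 'I_n -> 'M[F]_d) (y : 'I_n -> R) (E : 'M[F]_(d, r)) :
  (forall i, Defs.hermitian conjF (As i)) ->
  dotR y (meas As (E *m adj E)) <= opnorm conjF reF (measadj embF As y) * frob conjF reF E ^+ 2.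
Proof.
move=> hH.
have e : dotR y (meas As (E *m adj E)) = reF (\tr (adj E *m measadj embF As y *m E)).
  rewrite -mulmxA mxtrace_mulC /measadj !mulmx_suml raddf_sum rS /dotR.
  apply: eq_bigr => i _; rewrite /= -!scalemxAl mxtraceZ rE /meas /Defs.inner hH.
  by rewrite mulmxA.
rewrite e tr_cols rS frob_sq mulr_sumr; apply: ler_sum => j _; exact: quad_op.
Qed.

Lemma claim_gen : lemma1_claim conjF reF embF.
Proof.
move=> d n r p As Zs xi y Xs X hA hZ hr hr1 hy hZs H Rm D E.
have hH i : Defs.hermitian conjF (As i) by case: (hA i).
split; last first.
  rewrite lerD2l.
  set o := opnorm _ _ _; set q := (p%:R + 2); set f := frob _ _ _.
  have -> : 2 * o / q * f ^+ 2 = 2 / q * (o * f ^+ 2) by ring.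
  rewrite ler_wpM2l ?yS_le //.
  by rewrite divr_ge0 // addr_ge0.
have hS := @soc_main _ _ _ _ As y X E hA H.
pose w i := meas As (X *m adj X) i.
pose s i := meas As (E *m adj E) i.
pose T2 := X *m adj (E *m adj Rm) + (E *m adj Rm) *m adj X.
pose K := X *m Rm *m adj (X *m Rm).
pose U3 := embF (2^-1) *: (X *m Rm *m adj Rm).
have [fo1 _] := soc_facts H X.
have [fo2 _] := soc_facts H (E *m adj Rm).
have [fo3 _] := soc_facts H U3.
have eT3 i : meas As (X *m adj U3 + U3 *m adj X) i = meas As K i.
  rewrite /U3 adjE !adjM adjK -scalemxAr -scalemxAl /meas innerD !innerE /K adjM !mulmxA.
  by rewrite -mulrDl (_ : 2^-1 + 2^-1 = 1 :> R) ?mul1r //; lra.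
have eXs : Xs = E + X *m Rm by rewrite /E subrK.
have eZ : Zs = E *m adj E + T2 + K.
  rewrite hZs eXs /T2 /K adjD mulmxDl !mulmxDr !adjM !adjK !mulmxA.
  by rewrite !addrA [E *m adj E + _ + _]addrAC.
have hz i : meas As Zs i = s i + meas As T2 i + meas As K i.
  by rewrite eZ /meas !innerD.
have hD i : D i = w i - meas As Zs i by rewrite /D /meas innerB.
have hxi i : xi i = y i - meas As Zs i by rewrite hy /=; ring.
have fo1' : \sum_i (y i - w i) * w i = 0.
  have : \sum_i (y i - meas As (X *m adj X) i) * meas As (X *m adj X + X *m adj X) i
     = 2 * \sum_i (y i - w i) * w i.
    by rewrite mulr_sumr; apply: eq_bigr => i _; rewrite /w /meas innerD; ring.
  by rewrite fo1 => /esym/eqP; rewrite mulf_eq0 pnatr_eq0 /= => /eqP.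
have fo3' : \sum_i (y i - w i) * meas As K i = 0.
  by rewrite -[RHS]fo3; apply: eq_bigr => i _; rewrite eT3.
have key : sqnorm D = dotR xi D + \sum_i (y i - w i) * s i.
  have pt i : D i * D i = xi i * D i + (y i - w i) * s i
      + ((y i - w i) * meas As T2 i + (y i - w i) * meas As K i - (y i - w i) * w i).
    rewrite hD hxi hz; ring.
  rewrite /sqnorm /dotR (eq_bigr _ (fun i _ => pt i)) !big_split /= sumrN.
  have fo2' : \sum_i (y i - w i) * meas As T2 i = 0 by exact: fo2.
  by rewrite fo1' fo3' fo2' subr0 !addr0.
rewrite key lerD2l.
set S1 := \sum_i (y i - w i) * s i.
set Sy := dotR y _.
have eS2 : \sum_i meas As (E *m adj E) i * meas As (X *m adj X) i = Sy - S1.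
  rewrite /Sy /S1 /dotR -sumrB; apply: eq_bigr => i _; rewrite /s /w; ring.
have hS' : 2 * p%:R * S1 <= 4 * (Sy - S1) by rewrite -eS2.
have q0 : 0 < p%:R + 2 :> R by rewrite ltr_wpDl.
rewrite -(ler_pM2l q0) (_ : (p%:R + 2) * (2 / (p%:R + 2) * Sy) = 2 * Sy); last first.
  by field; rewrite gt_eqF.
nra.
Qed.
End Gen.
Theorem lemma1 (R : realType) :
  lemma1_claim (F := R) id id id /\
  lemma1_claim (F := R[i]) (@conjc R) (@Re R) (fun t : R => (t%:C)%C).
Proof.
split.
  apply: claim_gen => //.
  by move=> a; rewrite -expr2 Num.Theory.sqr_ge0.
apply: (@claim_gen R (R[i]) (@conjc R) (@Re R) (fun t : R => (t%:C)%C)).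
- exact: rmorphD.
- exact: rmorphM.
- exact: conjcK.
- exact: conjc1.
- exact: conjc_real.
- by move=> [a1 a2] [b1 b2].
- by move=> t [a1 a2] /=; simpc.
- by case.
- move=> [a1 a2] /=; simpc.
  by rewrite Num.Theory.addr_ge0 // -expr2 Num.Theory.sqr_ge0.
- by move=> [a1 a2] /=; simpc; rewrite [a2 * a1]mulrC subrr.
Qed.
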